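(* Let $p\ge 1$ be an integer. Define integers $\pi_r(m)$ for $r\ge1$ and $m\ge 0$ recursively by $\pi_1(m)=0$ and, for $r\ge 2$, $$\pi_r(m)=\sum_{k=0}^{r-1}r^k\,\mathbf{d}_r\!\left(\mathbf{d}_r\!\left(0,\ \mathbf{d}_r\!\left(0,\tfrac{m}{(r-1)!}\right)+k\right),\ (r-1)r^{r-1}+\sum_{j=0}^{r-2}r^j\,\mathbf{d}_{r-1}\!\left(j,\pi_{r-1}(m)\right)\right).$$ Then for each integer $m$ with $0\le m\le p!-1$ there is a permutation $\sigma_m$ of $\{0,1,\ldots,p-1\}$ with $\pi_p(m)=\sum_{k=0}^{p-1}p^k\sigma_m(k)$ (i.e. the radix-$p$ digits $\mathbf{d}_p(k,\pi_p(m))$, $k=0,\ldots,p-1$, are a rearrangement of $0,\ldots,p-1$), and $m\mapsto\sigma_m$ is a bijection from $\{0,\ldots,p!-1\}$ onto the set of all $p!$ permutations of $\{0,\ldots,p-1\}$; thus $\pi_p(m)$ is the $m$-th permutation in an enumeration of all permutations of $p$ symbols.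
   Context: For an integer $p\ge 2$, an integer $k\ge 0$ and a real number $x\ge0$, the digit function is $\mathbf{d}_p(k,x)=\lfloor x/p^k\rfloor-p\lfloor x/p^{k+1}\rfloor$; by convention $\mathbf{d}_1(k,x)=0$ for all $k,x$. A permutation $\sigma$ of $\{0,\ldots,p-1\}$ is encoded by the integer $\sum_{k=0}^{p-1}p^k\sigma(k)$, whose $k$-th radix-$p$ digit is the image of $k$. *)

(* Defs.v *)
From mathcomp Require Import all_boot all_order fingroup perm.
Set Implicit Arguments. Unset Strict Implicit. Unset Printing Implicit Defensive.

(* Digit function d_p(k, x) evaluated at the nonnegative rational x = a / b
   (b > 0):  floor(x / p^k) - p * floor(x / p^(k+1)), where
   floor((a/b)/p^k) = a %/ (b * p^k).  Convention d_1(k, x) = 0.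
   (For p = 0 the function is never used.) *)
Definition digitq (p k a b : nat) : nat :=
  if p == 1 then 0
  else a %/ (b * p ^ k) - p * (a %/ (b * p ^ k.+1)).

Definition digit (p k x : nat) : nat := digitq p k x 1.

(* piaux n m = pi_{n+1}(m). *)
Fixpoint piaux (n m : nat) : nat :=
  match n with
  | 0 => 0
  | n'.+1 =>
      let r := n'.+2 in
      let prev := piaux n' m in
      let A := (r - 1) * r ^ (r - 1)
               + \sum_(j < r - 1) r ^ j * digit (r - 1) j prev in
      \sum_(k < r)
        r ^ k * digit r (digit r 0 (digitq r 0 m (r - 1)`! + k)) A
  end.

Definition pi_rec (r m : nat) : nat := piaux r.-1 m.

(* Main.v *)
Require Import Defs.
From mathcomp Require Import all_boot all_order fingroup perm.
From mathcomp Require Import zify.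

Lemma digitE r i x : r != 1 -> digit r i x = x %/ r^i %% r.
Proof.
rewrite /digit /digitq => /negbTE ->. rewrite !mul1n expnSr divnMA.
by rewrite {1}(divn_eq (x %/ r^i) r) [r * _]mulnC addKn.
Qed.

Lemma digit_lt r i x : 0 < r -> digit r i x < r.
Proof.
case: (eqVneq r 1) => [-> _|r1 r0]; first by rewrite /digit /digitq.
by rewrite digitE // ltn_pmod.
Qed.

Lemma digit_sum r N (a : nat -> nat) i : 1 < r -> (forall j, j < N -> a j < r) ->
  i < N -> digit r i (\sum_(j < N) r ^ j * a j) = a i.
Proof.
move=> r1; elim: N a i => [//|N IH] a i ha hi.
rewrite big_ord_recl expn0 mul1n.
have -> : \sum_(j < N) r ^ bump 0 j * a (bump 0 j) = r * \sum_(j < N) r ^ j * a j.+1.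
  by rewrite big_distrr; apply: eq_bigr => j _; rewrite /bump /= add1n expnS mulnA.
have r0 : 0 < r by apply: ltn_trans r1.
have rn1 : r != 1 by rewrite neq_ltn r1 orbT.
case: i hi => [_|i hi].
  rewrite digitE // expn0 divn1 mulnC addnC modnMDl modn_small //; exact: ha.
set S := \sum_(j < N) _.
rewrite digitE // expnS divnMA.
have -> : (a 0 + r * S) %/ r = S.
  by rewrite mulnC addnC divnMDl // divn_small ?addn0 // ha.
rewrite -digitE //. apply: (IH (fun j => a j.+1)) => // j hj; exact: ha.
Qed.

Definition g n m k := digit n.+1 k (piaux n m).

Definition aa n m j := if j < n.+1 then g n m j else n.+1.

Definition cc n m := (m %/ n.+1`!) %% n.+2.

Lemma aa_lt n m j : j < n.+2 -> aa n m j < n.+2.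
Proof.
rewrite /aa; case: ifP => // h _; apply: ltn_trans (ltnSn _); exact: digit_lt.
Qed.

Lemma piaux_S n m : piaux n.+1 m =
  \sum_(k < n.+2) n.+2 ^ k * aa n m ((cc n m + k) %% n.+2).
Proof.
rewrite /=; apply: eq_bigr => k _; congr (_ * _).
have rn1 : n.+2 != 1 by [].
have -> : digitq n.+2 0 m (n.+2 - 1)`! = cc n m.
  rewrite /digitq /= subn1 /= expn0 expn1 muln1.
  by rewrite /cc {1}(divn_eq (m %/ n.+1`!) n.+2) divnMA [n.+2 * _]mulnC addKn.
rewrite [digit _ 0 _]digitE // expn0 divn1.
have -> : (n.+2 - 1) * n.+2 ^ (n.+2 - 1) + \sum_(j < n.+2 - 1) n.+2 ^ j * digit (n.+2 - 1) j (piaux n m)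
   = \sum_(j < n.+2) n.+2 ^ j * aa n m j.
  rewrite [RHS]big_ord_recr /= [RHS]addnC subn1 /=; congr (_ + _).
    by rewrite /aa ltnn mulnC.
  by apply: eq_bigr => j _; rewrite /aa ltn_ord.
by rewrite digit_sum ?ltn_pmod // => j hj; apply: aa_lt.
Qed.

Lemma g_S n m k : k < n.+2 -> g n.+1 m k = aa n m ((cc n m + k) %% n.+2).
Proof.
move=> hk; rewrite /g piaux_S (@digit_sum n.+2 n.+2 (fun j => aa n m ((cc n m + j) %% n.+2))) // => j _; apply: aa_lt; exact: ltn_pmod.
Qed.

Lemma g_lt n m k : g n m k < n.+1.
Proof. exact: digit_lt. Qed.

Lemma piaux_sum n m : piaux n m = \sum_(k < n.+1) n.+1 ^ k * g n m k.
Proof.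
case: n => [|n]; first by rewrite big_ord_recl big_ord0 /g /digit /digitq.
rewrite piaux_S; apply: eq_bigr => k _; by rewrite g_S.
Qed.

Lemma aa_inj n m i j : i < n.+2 -> j < n.+2 ->
  (forall i j, i < n.+1 -> j < n.+1 -> g n m i = g n m j -> i = j) ->
  aa n m i = aa n m j -> i = j.
Proof.
move=> hi hj IH; rewrite /aa.
case: ifP => hi'; case: ifP => hj' //.
- exact: IH.
- move=> e; have := g_lt n m i; rewrite e ltnn //.
- move=> e; have := g_lt n m j; rewrite -e ltnn //.
- move=> _; lia.
Qed.

Lemma g_inj n m i j : i < n.+1 -> j < n.+1 -> g n m i = g n m j -> i = j.
Proof.
elim: n i j => [|n IH] i j hi hj; first by lia.
rewrite !g_S // => /aa_inj.
have hc : cc n m < n.+2 by apply: ltn_pmod.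
move=> /(_ (ltn_pmod _ _) (ltn_pmod _ _) IH) e.
have : (cc n m + i == cc n m + j %[mod n.+2]) by apply/eqP; exact: e.
by rewrite eqn_modDl !modn_small // => /eqP.
Qed.

Lemma mod_split m a b : 0 < b -> m %% (a * b) = (m %/ b %% a) * b + m %% b.
Proof.
move=> hb; rewrite modn_divl; rewrite {1}(divn_eq (m %% (a * b)) b).
congr (_ + _); rewrite modn_dvdm //; exact: dvdn_mull.
Qed.

Lemma g_det n m m' : (forall k, k < n.+1 -> g n m k = g n m' k) ->
  m %% n.+1`! = m' %% n.+1`!.
Proof.
elim: n m m' => [|n IH] m m' h; first by rewrite !modn1.
have hc : cc n m < n.+2 by apply: ltn_pmod.
have hc' : cc n m' < n.+2 by apply: ltn_pmod.
have ec : cc n m = cc n m'.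
  have hk : n.+1 - cc n m < n.+2 by lia.
  have := h _ hk; rewrite !g_S //.
  have -> : cc n m + (n.+1 - cc n m) = n.+1 by lia.
  rewrite (modn_small (ltnSn _)) {1}/aa ltnn.
  rewrite /aa; case: ifP => hx.
    by move=> e; have := g_lt n m' ((cc n m' + (n.+1 - cc n m)) %% n.+2); rewrite -e ltnn.
  move=> _; move/negbT: hx; rewrite -leqNgt => hx.
  have hm : (cc n m' + (n.+1 - cc n m)) %% n.+2 < n.+2 by apply: ltn_pmod.
  have hx2 : (cc n m' + (n.+1 - cc n m)) %% n.+2 = n.+1 by lia.
  case: (ltngtP (cc n m') (cc n m)) => // lt.
  - by move: hx2; rewrite modn_small; lia.
  - move: hx2.
    have -> : cc n m' + (n.+1 - cc n m) = (cc n m' - cc n m).-1 + n.+2 by lia.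
    rewrite modnDr modn_small; lia.
have e2 : m %% n.+1`! = m' %% n.+1`!.
  apply: IH => k hk.
  have hk' : (k + (n.+2 - cc n m)) %% n.+2 < n.+2 by apply: ltn_pmod.
  have := h _ hk'; rewrite !g_S // -ec.
  have -> : (cc n m + (k + (n.+2 - cc n m)) %% n.+2) %% n.+2 = k.
    rewrite modnDmr addnA [cc n m + k]addnC -addnA.
    have -> : cc n m + (n.+2 - cc n m) = n.+2 by lia.
    by rewrite modnDr modn_small //; apply: ltnW.
  by rewrite /aa hk.
rewrite factS (mod_split m) ?fact_gt0 // (mod_split m') ?fact_gt0 //.
by rewrite -/(cc n m) -/(cc n m') ec e2.
Qed.

Theorem mainTheorem7 (p : nat) (hp : 1 <= p) :
  exists sigma : 'I_(p`!) -> {perm 'I_p},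
    bijective sigma /\
    forall m : 'I_(p`!), pi_rec p m = \sum_(k < p) (p ^ k * sigma m k)%N.
Proof.
case: p hp => // n _.
have finj : forall m : nat, injective (fun k : 'I_n.+1 => (Ordinal (g_lt n m k) : 'I_n.+1)).
  move=> m i j /(congr1 val) /= e; apply: val_inj; exact: g_inj e.
exists (fun m : 'I_(n.+1`!) => perm (finj m)); split.
  apply: inj_card_bij.
    move=> m m' e.
    have := @g_det n m m'.
    rewrite !modn_small ?ltn_ord //.
    move=> H; apply: val_inj; apply: H => k hk.
    have := congr1 (fun s : {perm 'I_n.+1} => val (s (Ordinal hk))) e.
    by rewrite /= !permE.
  by rewrite card_ord card_Sn.
move=> m; rewrite /pi_rec /= piaux_sum; apply: eq_bigr => k _; by rewrite permE.
Qed.
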